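(* Let $q\ge1$ and $t$ be integers with $0\le t<q$, and let $\mathcal{C}_{q,t}^{\mathrm{det}}=\bigcup_{i=0}^{\lfloor (q-1)/(t+1)\rfloor}\mathcal{S}_{q-i(t+1)}^q.$ Then $\mathcal{C}_{q,t}^{\mathrm{det}}$ is a $t$-tail-deletion-detecting code, and it is optimal, i.e. $\mathsf{DEL}_{\mathrm{det}}(q,t)=|\mathcal{C}_{q,t}^{\mathrm{det}}|=\sum_{i=0}^{\lfloor (q-1)/(t+1)\rfloor}|\mathcal{S}_{q-i(t+1)}^q|=q!\sum_{i=0}^{\lfloor (q-1)/(t+1)\rfloor}\frac{1}{(i(t+1))!}.$
   Context: Let $[q]=\{0,1,\dots,q-1\}$. For $1\le m\le q$, a partial permutation of length $m$ over $[q]$ is a sequence $\pi=(\pi_1,\dots,\pi_m)$ of $m$ pairwise distinct elements of $[q]$. Let $\mathcal{S}_m^q$ be the set of those of length $m$ and $\mathcal{S}_{\mathrm{all}}^q=\bigcup_{m=1}^{q}\mathcal{S}_m^q$. A code is any subset of $\mathcal{S}_{\mathrm{all}}^q$. For $\pi$ of length $m$ and integer $j\ge 0$, $\pi_{\downarrow j}=(\pi_{k+1},\dots,\pi_m)$ with $k=\min(j,m-1)$ (leftmost symbols are deleted; the last symbol is never deleted); $\mathcal{B}_{\mathrm{del}}^t(\pi)=\{\pi_{\downarrow j}:0\le j\le t\}$. A code $\mathcal{C}$ is $t$-tail-deletion-detecting if $\mathcal{C}\cap\mathcal{B}_{\mathrm{del}}^t(\pi)=\{\pi\}$ for every $\pi\in\mathcal{C}$.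 $\mathsf{DEL}_{\mathrm{det}}(q,t)$ denotes the maximum size of a $t$-tail-deletion-detecting code in $\mathcal{S}_{\mathrm{all}}^q$. *)

(* Defs.v *)
From mathcomp Require Import all_boot all_order all_algebra.
Unset Printing Implicit Defensive.

Definition pperm (q : nat) (s : seq 'I_q) : bool :=
  uniq s && (0 < size s <= q).

Definition tail_del (q : nat) (j : nat) (s : seq 'I_q) : seq 'I_q :=
  drop (minn j (size s).-1) s.

(* A code is a finite set of partial permutations, represented by a
   duplicate-free list [C] (all codes are finite since S_all^q is finite).
   t-tail-deletion-detecting: C ∩ B_del^t(pi) = {pi} for every pi in C.
   (pi itself is in B_del^t(pi) via j = 0, so this says every element of
   the ball lying in C equals pi.) *)
Definition tdd_code (q t : nat) (C : seq (seq 'I_q)) : Prop :=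
  forall p, p \in C -> forall j, j <= t -> tail_del q j p \in C -> tail_del q j p = p.

Definition is_code (q : nat) (C : seq (seq 'I_q)) : Prop :=
  uniq C /\ all (pperm q) C.

Definition is_DEL_det (q t n : nat) : Prop :=
  (exists C : seq (seq 'I_q), is_code q C /\ tdd_code q t C /\ size C = n) /\
  (forall C : seq (seq 'I_q), is_code q C -> tdd_code q t C -> size C <= n).

Definition in_Cdet (q t : nat) (s : seq 'I_q) : bool :=
  pperm q s && has (fun i => size s == q - i * t.+1) (iota 0 ((q - 1) %/ t.+1).+1).

(* Main.v *)
Require Import Defs.
From mathcomp Require Import all_boot all_order all_algebra.
From mathcomp Require Import zify.
Import GRing.Theory Num.Theory.

Section Helpers.
Variables q t : nat.
Hypothesis hq : 0 < q.
Local Notation k := ((q - 1) %/ t.+1).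

Lemma good_bound i : i < k.+1 -> i * t.+1 <= q - 1.
Proof.
move=> hi; apply: leq_trans (leq_divM (q - 1) t.+1).
by rewrite leq_mul2r -ltnS hi orbT.
Qed.

Lemma hasE (m : nat) :
  has (fun i => m == q - i * t.+1) (iota 0 k.+1) ->
  exists i, i * t.+1 <= q - 1 /\ m = q - i * t.+1.
Proof.
case/hasP=> i; rewrite mem_iota add0n => /andP[_ hi] /eqP ->.
by exists i; split=> //; apply: good_bound.
Qed.

Lemma tdd_Cdet p j : in_Cdet q t p -> j <= t ->
  in_Cdet q t (tail_del q j p) -> tail_del q j p = p.
Proof.
rewrite /in_Cdet /tail_del /pperm => /andP[/andP[_ /andP[m0 mq]] /hasE [i [hi hm]]] hj.
move=> /andP[_ /hasE [i' [hi' hm']]].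
move: hm'; rewrite size_drop.
set j' := minn j (size p).-1.
have hj1 : j' <= j by rewrite geq_minl.
have hj2 : j' <= (size p).-1 by rewrite geq_minr.
move=> hm'.
have eb : i' * t.+1 = i * t.+1 + j' by lia.
have -> : j' = 0.
  case: (leqP i' i) => hii.
    have : i' * t.+1 <= i * t.+1 by rewrite leq_mul2r hii orbT.
    lia.
  have : i.+1 * t.+1 <= i' * t.+1 by rewrite leq_mul2r hii orbT.
  rewrite mulSn; lia.
by rewrite drop0.
Qed.


Lemma mem_tup n (s : seq 'I_q) :
  (s \in [seq val x | x <- enum [set x : n.-tuple 'I_q | uniq x]]) =
  (size s == n) && uniq s.
Proof.
apply/mapP/andP.
  by case=> x; rewrite mem_enum inE => ux ->; rewrite size_tuple.
case=> /eqP hs us; exists (Tuple (introT eqP hs)) => //.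
by rewrite mem_enum inE.
Qed.

Definition ext (p : seq 'I_q) : seq 'I_q :=
  let m := size p in
  take ((q - (q - m) %/ t.+1 * t.+1) - m) [seq x <- enum 'I_q | x \notin p] ++ p.

Lemma ext_props p : pperm q p ->
  [/\ uniq (ext p), size (ext p) = q - (q - size p) %/ t.+1 * t.+1,
      drop ((q - (q - size p) %/ t.+1 * t.+1) - size p) (ext p) = p,
      (q - (q - size p) %/ t.+1 * t.+1) - size p <= t &
      size p <= q - (q - size p) %/ t.+1 * t.+1].
Proof.
rewrite /pperm => /andP[up /andP[m0 mq]].
set m := size p; set up' := q - _.
have hd := divn_eq (q - m) t.+1.
have hr := @ltn_pmod (q - m) t.+1 isT.
have hmu : m <= up' by rewrite /up'; lia.
have hr2 : up' - m <= t by rewrite /up'; lia.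
set F := [seq x <- enum 'I_q | x \notin p].
have hF : q - m <= size F.
  have := count_predC (mem p) (enum 'I_q); rewrite size_enum_ord.
  have : count (mem p) (enum 'I_q) <= m.
    rewrite -size_filter; apply: uniq_leq_size.
      exact: filter_uniq (enum_uniq _).
    by move=> x; rewrite mem_filter => /andP[].
  rewrite /F size_filter.
  have -> : count (fun x => x \notin p) (enum 'I_q) = count (predC (mem p)) (enum 'I_q) by [].
  lia.
have hup : up' <= q by exact: leq_subr.
have htk : size (take (up' - m) F) = up' - m by rewrite size_takel //; apply: leq_trans hF; rewrite leq_sub2r.
split.
- rewrite /ext /= cat_uniq up andbT (take_uniq _ (filter_uniq _ (enum_uniq _))) /=.
  apply/hasP => -[x xp /mem_take]; rewrite mem_filter => /andP[].
  by rewrite xp.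
- by rewrite /ext /= size_cat htk subnK.
- by rewrite /ext /= drop_size_cat.
- done.
- done.
Qed.

Lemma ext_Cdet p : pperm q p -> in_Cdet q t (ext p).
Proof.
move=> pp; have [u sz _ _ hmu] := ext_props p pp.
move: pp; rewrite /pperm => /andP[_ /andP[m0 mq]].
rewrite /in_Cdet /pperm u sz.
have h1 : 0 < q - (q - size p) %/ t.+1 * t.+1 by apply: leq_trans hmu.
rewrite h1 leq_subr !andTb.
apply/hasP; exists ((q - size p) %/ t.+1) => //.
rewrite mem_iota /= add0n ltnS leq_div2r //; lia.
Qed.

Lemma ext_inj_le (C : seq (seq 'I_q)) (p p' : seq 'I_q) :
  tdd_code q t C -> p \in C -> p' \in C -> pperm q p -> pperm q p' ->
  size p <= size p' -> ext p = ext p' -> p = p'.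
Proof.
move=> tdd pC p'C pp pp' hle he.
have [_ sz dr hr hmu] := ext_props p pp.
have [_ sz' dr' hr' hmu'] := ext_props p' pp'.
move: (pp) (pp'); rewrite /pperm => /andP[_ /andP[m0 mq]] /andP[_ /andP[m0' mq']].
have eU : q - (q - size p) %/ t.+1 * t.+1 = q - (q - size p') %/ t.+1 * t.+1.
  by rewrite -sz -sz' he.
rewrite eU in dr hr hmu.
set U := q - (q - size p') %/ t.+1 * t.+1 in dr dr' hr hr' hmu hmu' eU.
set m := size p in dr hr hmu hle m0 mq *.
set m' := size p' in dr' hr' hmu' hle m0' mq' *.
have hp : p = tail_del q (m' - m) p'.
  rewrite /tail_del -/m'.
  have -> : minn (m' - m) m'.-1 = m' - m by apply/minn_idPl; lia.
  transitivity (drop (m' - m) (drop (U - m') (ext p'))); last by rewrite dr'.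
  rewrite drop_drop -he -{1}dr; congr drop; lia.
have := tdd p' p'C (m' - m).
rewrite -hp => -> //; lia.
Qed.


Definition blk (i : nat) : seq (seq 'I_q) :=
  [seq val x | x <- enum [set x : (q - i * t.+1).-tuple 'I_q | uniq x]].

Definition Cdet := flatten [seq blk i | i <- iota 0 k.+1].

Lemma mem_Cdet (s : seq 'I_q) : (s \in Cdet) = in_Cdet q t s.
Proof.
apply/flattenP/idP.
  case=> l /mapP[i hi ->]; rewrite /blk mem_tup => /andP[/eqP hs us].
  move: (hi); rewrite mem_iota add0n => /andP[_ hik].
  have hb := good_bound i hik.
  rewrite /in_Cdet /pperm us hs.
  have -> : 0 < q - i * t.+1 by lia.
  rewrite leq_subr !andTb.
  by apply/hasP; exists i.
move=> /andP[/andP[us _] /hasP[i hi /eqP hs]].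
exists (blk i); first by apply: map_f.
by rewrite /blk mem_tup hs eqxx us.
Qed.

Lemma uniq_blocks r : uniq r -> {subset r <= iota 0 k.+1} ->
  uniq (flatten [seq blk i | i <- r]).
Proof.
elim: r => [//|i r IH] /= /andP[ir ur] sub.
rewrite cat_uniq IH ?andbT; last by move=> x xr; apply: sub; rewrite inE xr orbT.
- have hi : i \in iota 0 k.+1 by apply: sub; rewrite inE eqxx.
  apply/andP; split; first by rewrite map_inj_uniq ?enum_uniq //; exact: val_inj.
  apply/hasP => -[x /flattenP[l /mapP[j hj ->]]].
  rewrite /blk !mem_tup => /andP[/eqP h1 _] /andP[/eqP h2 _].
  have hj' : j \in iota 0 k.+1 by apply: sub; rewrite inE hj orbT.
  move: hi hj'; rewrite !mem_iota !add0n => /andP[_ hi] /andP[_ hj'].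
  have b1 := good_bound i hi; have b2 := good_bound j hj'.
  have : j * t.+1 == i * t.+1 by apply/eqP; lia.
  rewrite eqn_mul2r /= => /eqP eji.
  by move: ir; rewrite -eji hj.
- done.
Qed.

Lemma uniq_Cdet : uniq Cdet.
Proof. by apply: uniq_blocks; [exact: iota_uniq | ]. Qed.

Lemma size_Cdet : size Cdet =
  \sum_(i < k.+1) #|[set s : (q - i * t.+1).-tuple 'I_q | uniq s]|.
Proof.
rewrite /Cdet size_flatten /shape -map_comp sumnE big_map.
rewrite -(big_mkord xpredT (fun i => #|[set s : (q - i * t.+1).-tuple 'I_q | uniq s]|)).
rewrite /index_iota subn0; apply: eq_bigr => i _.
by rewrite /= /blk size_map -cardE.
Qed.

Lemma card_tup n : #|[set s : n.-tuple 'I_q | uniq s]| = q ^_ n.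
Proof.
have := @card_uniq_tuples _ n (@predT 'I_q).
rewrite card_ord => <-; apply: eq_card => x; by rewrite !inE all_predT.
Qed.

End Helpers.

Local Open Scope ring_scope.

Theorem mainTheorem8 (q t : nat) (hq : (1 <= q)%N) (ht : (t < q)%N) :
  exists C : seq (seq 'I_q),
    uniq C /\
    (forall s, (s \in C) = in_Cdet q t s) /\
    tdd_code q t C /\
    is_DEL_det q t (size C) /\
    size C = (\sum_(i < ((q - 1) %/ t.+1).+1)
                    #|[set s : (q - i * t.+1).-tuple 'I_q | uniq s]|)%N /\
    (size C)%:R = (q`!)%:R * \sum_(i < ((q - 1) %/ t.+1).+1)
                                  ((i * t.+1)`!)%:R^-1 :> rat.
Proof.
have tddC : tdd_code q t (Cdet q t).
  move=> p; rewrite (mem_Cdet q t hq) => hp j hj; rewrite (mem_Cdet q t hq) => hp'.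
  exact: (tdd_Cdet q t hq).
exists (Cdet q t); split; first exact: (uniq_Cdet q t hq).
split; first exact: (mem_Cdet q t hq).
split; first exact: tddC.
split.
  split.
    exists (Cdet q t); split => //; split; first exact: (uniq_Cdet q t hq).
    by apply/allP => s; rewrite (mem_Cdet q t hq) => /andP[].
  move=> C' [uC' aC'] tC'.
  rewrite -(size_map (ext q t)).
  apply: uniq_leq_size.
    rewrite map_inj_in_uniq // => x y xC yC he.
    have px := allP aC' x xC; have py := allP aC' y yC.
    case: (leqP (size x) (size y)) => hs.
      exact: (ext_inj_le q t hq _ _ _ tC').
    by apply/esym; apply: (ext_inj_le q t hq _ _ _ tC') => //; apply: ltnW.
  move=> y /mapP[x xC ->]; rewrite (mem_Cdet q t hq); apply: (ext_Cdet q t hq).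
  exact: allP aC' x xC.
split; first exact: size_Cdet.
rewrite size_Cdet natr_sum mulr_sumr; apply: eq_bigr => i _.
rewrite card_tup.
have hb : (i * t.+1 <= q)%N.
  exact: leq_trans (good_bound q t i (ltn_ord i)) (leq_subr 1 q).
have := ffact_fact (leq_subr (i * t.+1) q).
rewrite subKn // => E.
have nz : ((i * t.+1)`!)%:R != 0 :> rat by rewrite pnatr_eq0 -lt0n fact_gt0.
by rewrite -E natrM mulrK // unitfE.
Qed.
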